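(* Let $k\ge 2$ and let $G$ be a graph with no cycle of length $2k+1$. Let $V(G)=V_1\cup V_2\cup V_3$ be a partition into three parts. Let $G'$ be the graph on $V(G)$ whose edges are those edges of $G$ that lie in some triangle of $G$ having exactly one vertex in each of $V_1,V_2,V_3$. For $1\le i<j\le 3$ let $G_{ij}$ be the bipartite subgraph of $G'$ consisting of the edges of $G'$ with one end in $V_i$ and the other in $V_j$. Then each $G_{ij}$ contains no cycle of length $2k$.
   Context: All graphs are simple; a cycle of length $m$ is a (not necessarily induced) subgraph isomorphic to $C_m$. *)

(* Defs.v *)
From mathcomp Require Import all_boot.
Set Implicit Arguments. Unset Strict Implicit. Unset Printing Implicit Defensive.

Definition simple_graph (T : finType) (e : rel T) : Prop :=
  symmetric e /\ irreflexive e.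


Definition has_cycle (T : finType) (e : rel T) (m : nat) : Prop :=
  (3 <= m)%N /\
  exists f : nat -> T,
    {in [pred i | (i < m)%N] &, injective f} /\
    forall i : nat, (i < m)%N -> e (f i) (f ((i.+1) %% m)).

Definition Gprime (T : finType) (e : rel T) (part : T -> 'I_3) : rel T :=
  fun x y => e x y &&
    [exists z : T, [&& e x z, e y z,
                       part x != part y, part y != part z & part x != part z]].

Definition Gij (T : finType) (e : rel T) (part : T -> 'I_3) (i j : 'I_3) : rel T :=
  fun x y => Gprime e part x y &&
    (((part x == i) && (part y == j)) || ((part x == j) && (part y == i))).

(* Main.v *)
Require Import Defs.
From mathcomp Require Import all_boot.
From mathcomp Require Import zify.
Definition hh n := if n == 0 then 0 else n.-1.
Lemma hh_lt n m : (n < m.+1)%N -> (hh n < m.+1)%N.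
Proof. rewrite /hh; case: ifP => _; lia. Qed.
Lemma inj_part (T : finType) (k:nat) (f : nat -> T) z :
 (0 < k)%N -> {in [pred i | (i < 2*k)%N] &, injective f} ->
 (forall t, (t < 2 * k)%N -> f t != z) ->
 {in [pred i | (i < 2*k+1)%N] &, injective (fun n => if n == 1 then z else f (hh n))}.
Proof.
move=> k0 finj znf a b; rewrite !inE => ha hb /=.
  have hha : (hh a < 2 * k)%N by rewrite /hh; case: ifP; lia.
  have hhb : (hh b < 2 * k)%N by rewrite /hh; case: ifP; lia.
  case: ifP => [/eqP a1|a1]; case: ifP => [/eqP b1|b1].
  - by rewrite a1 b1.
  - by move=> E; move: (znf _ hhb); rewrite E eqxx.
  - by move=> E; move: (znf _ hha); rewrite E eqxx.
  move=> /finj; rewrite !inE => /(_ hha hhb); rewrite /hh.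
  move/negbT: a1; move/negbT: b1.
  by case: ifP => /eqP; case: ifP => /eqP; lia.
Qed.

Ltac nlia := repeat match goal with H : ?P |- _ =>
  lazymatch P with is_true (leq _ _) => fail | (@eq nat _ _) => fail | nat => fail | _ => clear H end end; lia.

Theorem mainTheorem4 (k : nat) (T : finType) (e : rel T) (part : T -> 'I_3) :
  (2 <= k)%N ->
  simple_graph e ->
  ~ has_cycle e (2 * k + 1) ->
  forall i j : 'I_3, (i < j)%N -> ~ has_cycle (Gij e part i j) (2 * k).
Proof.
move=> k2 [symE _] nocyc i j ij [m3 [f [finj fe]]].
have k0 : (0 < 2 * k)%N by nlia.
have pf : forall t, (t < 2 * k)%N -> (part (f t) == i) || (part (f t) == j).
  move=> t /fe /andP[_ /orP[/andP[-> _]|/andP[-> _]]]; by rewrite ?orbT.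
have := fe 0 k0 => /andP[/andP[e01 /existsP[z /and5P[e0z e1z n01 n1z n0z]]] pij].
have zi : part z != i.
  by case/orP: pij => /andP[/eqP a /eqP b]; rewrite -?a -?b eq_sym.
have zj : part z != j.
  by case/orP: pij => /andP[/eqP a /eqP b]; rewrite -?a -?b eq_sym.
have znf : forall t, (t < 2 * k)%N -> f t != z.
  move=> t /pf /orP[] /eqP pt; apply/eqP=> ft; [move: zi|move: zj];
    by rewrite -ft pt eqxx.
apply: nocyc; split; first nlia.
exists (fun n => if n == 1 then z else f (hh n)); split.
  by apply: inj_part => //; nlia.
move=> t ht.
case: t ht => [|t] ht.
  rewrite modn_small; last nlia. by [].
case: t ht => [|t] ht.
  rewrite /= modn_small; last nlia. rewrite /hh /=; rewrite symE; move: e1z; rewrite modn_small //; nlia.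
rewrite /hh /=.
have [lt|eq] := ltnP t.+3 (2 * k + 1).
  rewrite modn_small //=.
  have := fe t.+1 ltac:(nlia) => /andP[/andP[+ _] _].
  by rewrite modn_small; last nlia.
have -> : t.+3 = 2 * k + 1 by nlia.
rewrite modnn /=.
have := fe t.+1 ltac:(nlia) => /andP[/andP[+ _] _].
have -> : t.+2 = 2 * k by nlia.
by rewrite modnn.
Qed.
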